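(* Let $(X,\kappa)$ be a $\kappa$-connected digital image with more than one point. Then every constant map $f: X \to X$ is digitally homotopic to a map $g: X \to X$ that has no fixed points.
   Context: A digital image is a pair $(X,\kappa)$ with $X \subset \mathbb{Z}^n$ and $\kappa$ an adjacency relation on $X$; it is $\kappa$-connected if any two points are joined by a finite sequence of points of $X$ with consecutive points $\kappa$-adjacent. A function $h:(X,\kappa)\to(X,\kappa)$ is continuous if $x \leftrightarrow_\kappa x'$ implies $h(x)=h(x')$ or $h(x)\leftrightarrow_\kappa h(x')$. Two continuous maps $f,g: X\to X$ are (digitally) homotopic if there are $m \in \mathbb{N}$ and $F: X \times [0,m]_{\mathbb{Z}} \to X$ with $F(x,0)=f(x)$, $F(x,m)=g(x)$ for all $x$, each $x \mapsto F(x,t)$ continuous, and each $t\mapsto F(x,t)$ continuous from $[0,m]_{\mathbb{Z}}$ with $2$-adjacency (consecutive integers adjacent) to $(X,\kappa)$. *)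

(* Defs.v *)
From mathcomp Require Import all_boot.
From mathcomp Require Import ssralg ssrint.
Set Implicit Arguments. Unset Strict Implicit. Unset Printing Implicit Defensive.

Definition pt (n : nat) := (n.-tuple int)%type.

Definition adjacency (T : eqType) (k : rel T) : Prop :=
  irreflexive k /\ symmetric k.

Definition digitally_connected (T : eqType) (X : pred T) (k : rel T) : Prop :=
  forall x y, x \in X -> y \in X ->
    exists s : seq T, [/\ all (mem X) s, path k x s & last x s = y].

Definition maps_into (T : eqType) (X : pred T) (h : T -> T) : Prop :=
  forall x, x \in X -> h x \in X.

Definition digitally_continuous (T : eqType) (X : pred T) (k : rel T)
  (h : T -> T) : Prop :=
  forall x x', x \in X -> x' \in X -> k x x' -> h x = h x' \/ k (h x) (h x').

(* Digital homotopy between f and g (maps X -> X): values are only relevant on X. *)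
Definition digitally_homotopic (T : eqType) (X : pred T) (k : rel T)
  (f g : T -> T) : Prop :=
  exists (m : nat) (F : T -> nat -> T),
    [/\ forall x, x \in X -> F x 0 = f x,
        forall x, x \in X -> F x m = g x,
        forall t, t <= m -> maps_into X (fun x => F x t),
        forall t, t <= m -> digitally_continuous X k (fun x => F x t)
      & forall x t, x \in X -> t < m -> F x t = F x t.+1 \/ k (F x t) (F x t.+1)].

(* Main.v *)
Require Import Defs.
From mathcomp Require Import all_boot.
From mathcomp Require Import ssralg ssrint.

Theorem mainTheorem11 (n : nat) (X : pred (pt n)) (kappa : rel (pt n)) :
  adjacency kappa ->
  digitally_connected X kappa ->
  (exists x y, [/\ x \in X, y \in X & x != y]) ->
  forall c : pt n, c \in X ->
  exists g : pt n -> pt n,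
    [/\ maps_into X g, digitally_continuous X kappa g,
        digitally_homotopic X kappa (fun _ => c) g
      & forall x, x \in X -> g x != x].
Proof.
move=> [irr sym] conn [x [y [xX yX xy]]] c cX.
have [d [dX cd]] : exists d, d \in X /\ kappa c d.
  have [z [zX zc]] : exists z, z \in X /\ z != c.
    case: (eqVneq x c) => [exc|nxc]; last by exists x.
    by exists y; split => //; rewrite -exc eq_sym.
  have [s [allS pS lS]] := conn c z cX zX.
  case: s allS pS lS => [|a s] /=.
    by move=> _ _ E; rewrite E eqxx in zc.
  by move=> /andP[aX _] /andP[ca _] _; exists a.
have dc : d != c by apply/eqP => E; rewrite E irr in cd.
have kdc : kappa d c by rewrite sym.
pose g := fun x => if x == c then d else c.
have gcont : digitally_continuous X kappa g.
  move=> u v uX vX kuv; rewrite /g.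
  case: (eqVneq u c) => [uc|uc]; case: (eqVneq v c) => [vc|vc] //.
  - by rewrite uc vc irr in kuv.
  - by right.
  - by right.
  - by left.
exists g; split.
- by move=> u uX; rewrite /g; case: (u == c).
- exact: gcont.
- exists 1, (fun u t => if t == 0 then c else g u); split => //.
  + move=> t _ u uX /=; case: (t == 0) => //; rewrite /g; by case: (u == c).
  + move=> t _ u v uX vX kuv /=; case: (t == 0); first by left.
    exact: gcont.
  + move=> u [|t] uX //= _; rewrite /g; case: (u == c); [by right | by left].
- move=> u uX; rewrite /g; case: (eqVneq u c) => [uc|uc] //.
  by rewrite uc.
  by rewrite eq_sym.
Qed.
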